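(* For every $n\ge1$, the set $\Theta(\mathcal S^C_{2n}(321))$ equals the set of signed permutations in $B_n$ that avoid all six signed patterns $$321,\quad \bar3\,2\,1,\quad 3\,2\,\bar1,\quad \bar3\,2\,\bar1,\quad 1\,\bar2,\quad \bar1\,\bar2.$$
   Context: $B_n$ is the hyperoctahedral group: bijections $\sigma$ of $\{-n,\dots,-1,1,\dots,n\}$ with $\sigma(-i)=-\sigma(i)$, written as the word $\sigma(1)\cdots\sigma(n)$; $\bar a$ denotes $-a$, and $|\sigma|=|\sigma(1)|\cdots|\sigma(n)|\in\mathcal S_n$. $\mathcal S^C_{2n}(321)$ is the set of $321$-avoiding permutations $\pi\in\mathcal S_{2n}$ that are centrosymmetric, i.e. $\pi(i)+\pi(2n+1-i)=2n+1$ for all $i$. The map $\Theta$ sends a centrosymmetric $\pi\in\mathcal S_{2n}$ to the element of $B_n$ given, for $1\le i\le n$, by $\Theta(\pi)(i)=\pi(n+i)-n$ if $\pi(n+i)>n$ and $\Theta(\pi)(i)=\pi(n+i)-n-1$ otherwise. A signed permutation $\sigma\in B_n$ contains a signed pattern $\tau\in B_k$ if there are indices $1\le i_1<\dots<i_k\le n$ such that $|\sigma(i_1)|\cdots|\sigma(i_k)|$ is order-isomorphic to $|\tau|$ and $\sigma(i_j)$ has the same sign as $\tau(j)$ for each $j$; otherwise $\sigma$ avoids $\tau$. *)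

(* Defs.v *)
(* Permutations and signed permutations are represented
   by their one-line words (1-indexed values, as in the paper). *)
From HB Require Import structures.
From mathcomp Require Import all_boot all_order all_algebra.
Set Implicit Arguments. Unset Strict Implicit. Unset Printing Implicit Defensive.

Definition is_perm_word (m : nat) (pi : seq nat) : bool :=
  perm_eq pi (iota 1 m).

(* centrosymmetric: pi(i) + pi(m+1-i) = m+1 (here with 0-indexed positions) *)
Definition centrosymmetric (pi : seq nat) : Prop :=
  forall i, i < size pi ->
    nth 0 pi i + nth 0 pi (size pi - 1 - i) = (size pi).+1.

Definition avoids321 (pi : seq nat) : Prop :=
  ~ (exists i j k, [/\ i < j, j < k, k < size pi,
        nth 0 pi j < nth 0 pi i & nth 0 pi k < nth 0 pi j]).

Definition SC321 (n : nat) (pi : seq nat) : Prop :=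
  [/\ is_perm_word (2 * n) pi, centrosymmetric pi & avoids321 pi].

Definition Theta (n : nat) (pi : seq nat) : seq int :=
  [seq (if n < v then (v%:Z - n%:Z)%R else (v%:Z - n%:Z - 1)%R) | v <- drop n pi].

(* sigma is an element of B_n, given as the word sigma(1)...sigma(n):
   |sigma| is a permutation of {1..n} (this determines the odd bijection
   of {-n..-1,1..n}). *)
Definition signed_perm (n : nat) (w : seq int) : bool :=
  perm_eq [seq absz x | x <- w] (iota 1 n).

Definition contains_signed (sigma tau : seq int) : Prop :=
  exists s : seq int, [/\ subseq s sigma, size s = size tau,
    (forall a b, a < size tau -> b < size tau ->
       (absz (nth 0%R s a) < absz (nth 0%R s b)) =
       (absz (nth 0%R tau a) < absz (nth 0%R tau b))) &
    (forall a, a < size tau -> (0 < nth 0%R s a)%R = (0 < nth 0%R tau a)%R)].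

Definition avoids_signed (sigma tau : seq int) : Prop := ~ contains_signed sigma tau.

Definition six_patterns : seq (seq int) :=
  [:: [:: 3; 2; 1]%Z; [:: -3; 2; 1]%Z; [:: 3; 2; -1]%Z; [:: -3; 2; -1]%Z;
      [:: 1; -2]%Z; [:: -1; -2]%Z].

(* Main.v *)
Require Import Defs.
From mathcomp Require Import all_boot all_order all_algebra.
From mathcomp Require Import zify.
Set Implicit Arguments. Unset Strict Implicit. Unset Printing Implicit Defensive.
Import GRing.Theory Num.Theory.

Lemma subseq_idx (T : eqType) (x0 : T) (s w : seq T) : subseq s w ->
  exists f : nat -> nat,
   (forall a, a < size s -> f a < size w /\ nth x0 s a = nth x0 w (f a)) /\
   (forall a b, a < b -> b < size s -> f a < f b).
Proof.
elim: w s => [|y w IH] s.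
  rewrite subseq0 => /eqP ->; exists id; split => // a b; lia.
case: s => [|z s].
  move=> _; exists id; split => // a b; rewrite /=; lia.
rewrite /=; case: eqP => [<-|_] /IH [f [H1 H2]].
  exists (fun a => if a is a'.+1 then (f a').+1 else 0); split.
    move=> [|a] //= Ha; have [? ?] := H1 a Ha; split => //.
  move=> [|a] [|b] //= Hab Hb; rewrite ltnS; exact: H2.
exists (fun a => (f a).+1); split.
  move=> a Ha; have [? ?] := H1 a Ha; split => //.
move=> a b Hab Hb; rewrite ltnS; exact: H2.
Qed.

Lemma subseq_nth_cons (T : eqType) (x0 : T) (w s : seq T) i :
  i < size w -> subseq s (drop i.+1 w) -> subseq (nth x0 w i :: s) w.
Proof.
elim: w i => [|y w IH] [|i] //=.
  by rewrite eqxx drop0.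
move=> Hi Hs; case: eqP => _; last exact: IH.
exact: subseq_trans Hs (drop_subseq _ _).
Qed.

Lemma subseq_nth_drop (T : eqType) (x0 : T) (w s : seq T) d i :
  d <= i -> i < size w -> subseq s (drop i.+1 w) -> subseq (nth x0 w i :: s) (drop d w).
Proof.
move=> Hd Hi Hs.
have -> : nth x0 w i = nth x0 (drop d w) (i - d) by rewrite nth_drop; congr nth; lia.
apply: subseq_nth_cons; first by rewrite size_drop; lia.
by rewrite drop_drop; have -> : ((i - d).+1 + d = i.+1)%N by lia.
Qed.

Lemma idx_subseq3 (T : eqType) (x0 : T) (w : seq T) i j k :
  i < j -> j < k -> k < size w ->
  subseq [:: nth x0 w i; nth x0 w j; nth x0 w k] w.
Proof.
move=> Hij Hjk Hk; rewrite -{4}(drop0 w).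
apply: subseq_nth_drop; [lia|lia|].
apply: subseq_nth_drop; [lia|lia|].
apply: subseq_nth_drop; [lia|lia|exact: sub0seq].
Qed.

Lemma idx_subseq2 (T : eqType) (x0 : T) (w : seq T) i j :
  i < j -> j < size w -> subseq [:: nth x0 w i; nth x0 w j] w.
Proof.
move=> Hij Hj; rewrite -{3}(drop0 w).
apply: subseq_nth_drop; [lia|lia|].
apply: subseq_nth_drop; [lia|lia|exact: sub0seq].
Qed.

Definition PatX (n : nat) (x : nat -> int) : Prop :=
  (exists i j k, [/\ (i < j)%N, (j < k)%N, (k < n)%N &
                       (0 < x k)%R /\ (x k < x j)%R /\ (x j < x i)%R]) \/
      (exists i j k, [/\ (i < j)%N, (j < k)%N, (k < n)%N &
                       (x i < 0)%R /\ (0 < x k)%R /\ (x k < x j)%R /\ (x j < - x i)%R]) \/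
      (exists i j k, [/\ (i < j)%N, (j < k)%N, (k < n)%N &
                       (x k < 0)%R /\ (- x k < x j)%R /\ (x j < x i)%R]) \/
      (exists i j k, [/\ (i < j)%N, (j < k)%N, (k < n)%N &
                       (x i < 0)%R /\ (x k < 0)%R /\ (- x k < x j)%R /\ (x j < - x i)%R]) \/
      (exists i j, [/\ (i < j)%N, (j < n)%N & (0 < x i)%R /\ (x i < - x j)%R]) \/
      (exists i j, [/\ (i < j)%N, (j < n)%N & (x j < x i)%R /\ (x i < 0)%R]).

Definition Pat (w : seq int) : Prop := PatX (size w) (nth 0%R w).

Ltac normr H := match type of H with ?a = ?b =>
  let v := eval vm_compute in b in change (a = v) in H end.

Lemma six_Pat (w : seq int) (nz : forall i, (i < size w)%N -> (0 < absz (nth 0%R w i))%N) :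
  (exists tau, tau \in six_patterns /\ contains_signed w tau) <-> Pat w.
Proof.
split.
{ move=> [tau [Ht [s [Hsub Hsz Habs Hsg]]]].
  have [f [Hf1 Hf2]] := subseq_idx 0%R Hsub.
  rewrite Hsz in Hf1 Hf2.
  move: Ht; rewrite /six_patterns !in_cons in_nil orbF.
  move=> /orP[/eqP Et|/orP[/eqP Et|/orP[/eqP Et|/orP[/eqP Et|/orP[/eqP Et|/eqP Et]]]]].
  all: subst tau.
  all: rewrite /Pat /PatX.
  all: have [F0 E0] := Hf1 0 isT; have [F1 E1] := Hf1 1 isT.
  all: have Z0 := nz _ F0; have Z1 := nz _ F1.
  all: have L01 := Hf2 0 1 isT isT.
  all: move: (Habs 0 1 isT isT) (Habs 1 0 isT isT) (Hsg 0 isT) (Hsg 1 isT) => /=;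
    rewrite E0 E1 => A01 A10 S0 S1; normr A01; normr A10; normr S0; normr S1.
  5: do 4 right; left; exists (f 0), (f 1); split => //; clear -L01 F1 Z0 Z1 A01 A10 S0 S1; move: A01 A10 S0 S1 Z0 Z1;
  move: (nth _ _ (f 0)) (nth _ _ (f 1)) => a b; lia.
  5: by do 5 right; exists (f 0), (f 1); split => //; clear -L01 F1 Z0 Z1 A01 A10 S0 S1; move: A01 A10 S0 S1 Z0 Z1;
  move: (nth _ _ (f 0)) (nth _ _ (f 1)) => a b; lia.
  all: have [F2 E2] := Hf1 2 isT; have Z2 := nz _ F2; have L12 := Hf2 1 2 isT isT.
  all: move: (Habs 1 2 isT isT) (Habs 2 1 isT isT) (Hsg 2 isT) => /=;
    rewrite E1 E2 => A12 A21 S2; normr A12; normr A21; normr S2.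
  by left; exists (f 0), (f 1), (f 2); split => //; clear -L01 L12 F2 Z0 Z1 Z2 A01 A12 A10 A21 S0 S1 S2;
  move: A01 A12 A10 A21 S0 S1 S2 Z0 Z1 Z2;
  move: (nth _ _ (f 0)) (nth _ _ (f 1)) (nth _ _ (f 2)) => a b c; lia.
  by right; left; exists (f 0), (f 1), (f 2); split => //; clear -L01 L12 F2 Z0 Z1 Z2 A01 A12 A10 A21 S0 S1 S2;
  move: A01 A12 A10 A21 S0 S1 S2 Z0 Z1 Z2;
  move: (nth _ _ (f 0)) (nth _ _ (f 1)) (nth _ _ (f 2)) => a b c; lia.
  by do 2 right; left; exists (f 0), (f 1), (f 2); split => //; clear -L01 L12 F2 Z0 Z1 Z2 A01 A12 A10 A21 S0 S1 S2;
  move: A01 A12 A10 A21 S0 S1 S2 Z0 Z1 Z2;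
  move: (nth _ _ (f 0)) (nth _ _ (f 1)) (nth _ _ (f 2)) => a b c; lia.
  by do 3 right; left; exists (f 0), (f 1), (f 2); split => //; clear -L01 L12 F2 Z0 Z1 Z2 A01 A12 A10 A21 S0 S1 S2;
  move: A01 A12 A10 A21 S0 S1 S2 Z0 Z1 Z2;
  move: (nth _ _ (f 0)) (nth _ _ (f 1)) (nth _ _ (f 2)) => a b c; lia.
}
move=> [H|[H|[H|[H|[H|H]]]]].
- move: H => [i [j [k [H1 H2 H3 H4]]]]; exists [:: 3; 2; 1]%Z; split; first by rewrite !inE eqxx.
  exists [:: nth 0%R w i; nth 0%R w j; nth 0%R w k]; split => //; first exact: idx_subseq3.
    move=> [|[|[|a]]] [|[|[|b]]] //= _ _; move: H4;
    move: (nth _ w i) (nth _ w j) (nth _ w k) => a b c; lia.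
  move=> [|[|[|a]]] //= _; move: H4;
    move: (nth _ w i) (nth _ w j) (nth _ w k) => a b c; lia.
- move: H => [i [j [k [H1 H2 H3 H4]]]]; exists [:: -3; 2; 1]%Z; split; first by rewrite !inE eqxx ?orbT.
  exists [:: nth 0%R w i; nth 0%R w j; nth 0%R w k]; split => //; first exact: idx_subseq3.
    move=> [|[|[|a]]] [|[|[|b]]] //= _ _; move: H4;
    move: (nth _ w i) (nth _ w j) (nth _ w k) => a b c; lia.
  move=> [|[|[|a]]] //= _; move: H4;
    move: (nth _ w i) (nth _ w j) (nth _ w k) => a b c; lia.
- move: H => [i [j [k [H1 H2 H3 H4]]]]; exists [:: 3; 2; -1]%Z; split; first by rewrite !inE eqxx ?orbT.
  exists [:: nth 0%R w i; nth 0%R w j; nth 0%R w k]; split => //; first exact: idx_subseq3.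
    move=> [|[|[|a]]] [|[|[|b]]] //= _ _; move: H4;
    move: (nth _ w i) (nth _ w j) (nth _ w k) => a b c; lia.
  move=> [|[|[|a]]] //= _; move: H4;
    move: (nth _ w i) (nth _ w j) (nth _ w k) => a b c; lia.
- move: H => [i [j [k [H1 H2 H3 H4]]]]; exists [:: -3; 2; -1]%Z; split; first by rewrite !inE eqxx ?orbT.
  exists [:: nth 0%R w i; nth 0%R w j; nth 0%R w k]; split => //; first exact: idx_subseq3.
    move=> [|[|[|a]]] [|[|[|b]]] //= _ _; move: H4;
    move: (nth _ w i) (nth _ w j) (nth _ w k) => a b c; lia.
  move=> [|[|[|a]]] //= _; move: H4;
    move: (nth _ w i) (nth _ w j) (nth _ w k) => a b c; lia.
- move: H => [i [j [H1 H2 H4]]]; exists [:: 1; -2]%Z; split; first by rewrite !inE eqxx ?orbT.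
  exists [:: nth 0%R w i; nth 0%R w j]; split => //; first exact: idx_subseq2.
    move=> [|[|a]] [|[|b]] //= _ _; move: H4;
    move: (nth _ w i) (nth _ w j) => a b; lia.
  move=> [|[|a]] //= _; move: H4;
    move: (nth _ w i) (nth _ w j) => a b; lia.
- move: H => [i [j [H1 H2 H4]]]; exists [:: -1; -2]%Z; split; first by rewrite !inE eqxx ?orbT.
  exists [:: nth 0%R w i; nth 0%R w j]; split => //; first exact: idx_subseq2.
    move=> [|[|a]] [|[|b]] //= _ _; move: H4;
    move: (nth _ w i) (nth _ w j) => a b; lia.
  move=> [|[|a]] //= _; move: H4;
    move: (nth _ w i) (nth _ w j) => a b; lia.
Qed.

Definition UX (n : nat) (x : nat -> int) (p : nat) : int :=
  if (p < n)%N then (- x (n.-1 - p)%N)%R else x (p - n)%N.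

Lemma UX_hi n x i : UX n x (n + i) = x i.
Proof. rewrite /UX ifF; last lia. by congr x; lia. Qed.

Lemma UX_lo n x i : (i < n)%N -> UX n x (n.-1 - i) = (- x i)%R.
Proof. move=> Hi; rewrite /UX ifT; last lia. by by congr (- x _)%R; lia. Qed.

Definition has321 (n : nat) (x : nat -> int) : Prop :=
  exists p q r, [/\ (p < q)%N, (q < r)%N, (r < 2 * n)%N &
     (UX n x q < UX n x p)%R /\ (UX n x r < UX n x q)%R].

Lemma Pat_321 n x : PatX n x -> has321 n x.
Proof.
move=> [[i [j [k [H1 H2 H3 H4]]]]|[[i [j [k [H1 H2 H3 H4]]]]|[[i [j [k [H1 H2 H3 H4]]]]|
        [[i [j [k [H1 H2 H3 H4]]]]|[[i [j [H1 H2 H4]]]|[i [j [H1 H2 H4]]]]]]]].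
- exists (n + i), (n + j), (n + k); rewrite !UX_hi; split; lia.
- exists (n.-1 - i), (n + j), (n + k); rewrite !UX_hi UX_lo; [split; lia|lia].
- exists (n + i), (n + j), (n + k); rewrite !UX_hi; split; lia.
- exists (n.-1 - i), (n + j), (n + k); rewrite !UX_hi UX_lo; [split; lia|lia].
- exists (n.-1 - j), (n.-1 - i), (n + j); rewrite !UX_hi !UX_lo; [split; lia|lia|lia].
- exists (n.-1 - j), (n.-1 - i), (n + i); rewrite !UX_hi !UX_lo; [split; lia|lia|lia].
Qed.

Lemma UX_dec n x p : (p < 2 * n)%N ->
  (exists a, [/\ (a < n)%N, p = (n.-1 - a)%N & UX n x p = (- x a)%R]) \/
  (exists a, [/\ (a < n)%N, p = (n + a)%N & UX n x p = x a]).
Proof.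
move=> Hp; case: (ltnP p n) => Hpn.
  left; exists (n.-1 - p); split; [lia|lia|]; rewrite /UX ifT //; by congr (- x _)%R; lia.
right; exists (p - n); split; [lia|lia|]; rewrite /UX ifF; [by []|lia].
Qed.

Lemma U321_Pat n x
  (nz : forall i, (i < n)%N -> x i <> 0%R)
  (dist : forall i j, (i < n)%N -> (j < n)%N -> i <> j -> x i <> x j /\ x i <> (- x j)%R) :
  has321 n x -> PatX n x.
Proof.
move=> [p [q [r [Hpq Hqr Hr [Hv1 Hv2]]]]].
have Hp : (p < 2 * n)%N by lia.
have Hq : (q < 2 * n)%N by lia.
case: (UX_dec x Hp) => [[a [Ha Ea Va]]|[a [Ha Ea Va]]];
case: (UX_dec x Hq) => [[b [Hb Eb Vb]]|[b [Hb Eb Vb]]];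
case: (UX_dec x Hr) => [[c [Hc Ec Vc]]|[c [Hc Ec Vc]]];
rewrite ?Va ?Vb ?Vc in Hv1 Hv2; subst p q r; try lia.
- (* FFF : c < b < a, x c > x b > x a *)
  have Zb := nz b Hb; have [_ Dbc] := dist b c Hb Hc ltac:(lia).
  have [Hxb|Hxb] : (x b < 0)%R \/ (0 < x b)%R by lia.
    by do 5 right; exists b, a; split; lia.
  have [Hxa|Hxa] : (x a < 0)%R \/ (0 < x a)%R by move: (nz a Ha); lia.
    have [H|H] : (- x a < x b)%R \/ (x b < - x a)%R by have [_ ?] := dist b a Hb Ha ltac:(lia); lia.
      by do 2 right; left; exists c, b, a; split; lia.
    by do 4 right; left; exists b, a; split; lia.
  by left; exists c, b, a; split; lia.
- (* FFS *)
  have [Hxb|Hxb] : (x b < 0)%R \/ (0 < x b)%R by move: (nz b Hb); lia.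
    by do 5 right; exists b, a; split; lia.
  case: (ltngtP c b) => Hcb; last first.
  + subst c; lia.
  + by do 4 right; left; exists b, c; split; lia.
  have [Hxa|Hxa] : (x a < 0)%R \/ (0 < x a)%R by move: (nz a Ha); lia.
    have [H|H] : (- x a < x b)%R \/ (x b < - x a)%R by have [_ ?] := dist b a Hb Ha ltac:(lia); lia.
      by do 3 right; left; exists c, b, a; split; lia.
    by do 4 right; left; exists b, a; split; lia.
  by right; left; exists c, b, a; split; lia.
- (* FSS *)
  have [Hxc|Hxc] : (x c < 0)%R \/ (0 < x c)%R by move: (nz c Hc); lia.
    have [Hxb|Hxb] : (x b < 0)%R \/ (0 < x b)%R by move: (nz b Hb); lia.
      by do 5 right; exists b, c; split; lia.
    have [H|H] : (- x c < x b)%R \/ (x b < - x c)%R by have [_ ?] := dist b c Hb Hc ltac:(lia); lia.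
      case: (ltngtP a b) => Hab; last first.
      * subst a; lia.
      * by do 4 right; left; exists b, a; split; lia.
      by do 3 right; left; exists a, b, c; split; lia.
    by do 4 right; left; exists b, c; split; lia.
  case: (ltngtP a b) => Hab; last first.
  * subst a; lia.
  * by do 4 right; left; exists b, a; split; lia.
  by right; left; exists a, b, c; split; lia.
- (* SSS *)
  have [Hxb|Hxb] : (x b < 0)%R \/ (0 < x b)%R by move: (nz b Hb); lia.
    by do 5 right; exists b, c; split; lia.
  have [Hxc|Hxc] : (x c < 0)%R \/ (0 < x c)%R by move: (nz c Hc); lia.
    have [H|H] : (- x c < x b)%R \/ (x b < - x c)%R by have [_ ?] := dist b c Hb Hc ltac:(lia); lia.
      by do 2 right; left; exists a, b, c; split; lia.
    by do 4 right; left; exists b, c; split; lia.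
  by left; exists a, b, c; split; lia.
Qed.

Definition E (n : nat) (v : int) : nat :=
  if (0 < v)%R then (absz v + n)%N else (n.+1 - absz v)%N.

Definition th (n v : nat) : int :=
  if (n < v)%N then (v%:Z - n%:Z)%R else (v%:Z - n%:Z - 1)%R.

Lemma Theta_th n pi : Theta n pi = map (th n) (drop n pi).
Proof. by []. Qed.

Lemma theta_E n v : E n (th n v) = v.
Proof. rewrite /th; case: ifP => H; rewrite /E; case: ifP => H2; lia. Qed.

Lemma E_theta n (v : int) : v <> 0%R -> (absz v <= n)%N -> th n (E n v) = v.
Proof. move=> H1 H2; rewrite /E; case: ifP => H; rewrite /th; case: ifP => H3; lia. Qed.

Lemma E_neg n (v : int) : v <> 0%R -> (absz v <= n)%N -> (E n (- v) + E n v = (2 * n).+1)%N.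
Proof. move=> H1 H2; rewrite /E; case: ifP => H; case: ifP => H3; lia. Qed.

Lemma E_lt n (v v' : int) : v <> 0%R -> v' <> 0%R -> (absz v <= n)%N -> (absz v' <= n)%N ->
  (E n v < E n v')%N <-> (v < v')%R.
Proof. move=> H1 H2 H3 H4; rewrite /E; case: ifP => H; case: ifP => H5; split => ?; lia. Qed.

Lemma E_bnd n (v : int) : v <> 0%R -> (absz v <= n)%N -> (0 < E n v)%N /\ (E n v <= 2 * n)%N.
Proof. move=> H1 H2; rewrite /E; case: ifP => H; split; lia. Qed.

Lemma th_bnd n v : (0 < v)%N -> (v <= 2 * n)%N -> th n v <> 0%R /\ (0 < absz (th n v) <= n)%N.
Proof. move=> H1 H2; rewrite /th; case: ifP => H; split; lia. Qed.

Definition piw (n : nat) (w : seq int) : seq nat :=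
  mkseq (fun p => E n (UX n (nth 0%R w) p)) (2 * n).

Lemma UX_bnd n x p : (p < 2 * n)%N ->
  (forall i, (i < n)%N -> x i <> 0%R /\ (absz (x i) <= n)%N) ->
  UX n x p <> 0%R /\ (absz (UX n x p) <= n)%N.
Proof.
move=> Hp Hb; case: (UX_dec x Hp) => [[a [Ha _ ->]]|[a [Ha _ ->]]];
have [? ?] := Hb a Ha; split; lia.
Qed.

Lemma mk_321 n x :
  (forall i, (i < n)%N -> x i <> 0%R /\ (absz (x i) <= n)%N) ->
  avoids321 (mkseq (fun p => E n (UX n x p)) (2 * n)) <-> ~ has321 n x.
Proof.
move=> Hb; rewrite /avoids321 /has321 size_mkseq.
split => H.
  move=> [p [q [r [H1 H2 H3 H4]]]]; apply: H; exists p, q, r.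
  have [Ap Bp] := UX_bnd (ltn_trans H1 (ltn_trans H2 H3)) Hb.
  have [Aq Bq] := UX_bnd (ltn_trans H2 H3) Hb.
  have [Ar Br] := UX_bnd H3 Hb.
  rewrite !nth_mkseq; try lia.
  case: H4 => H4 H5; split => //.
    exact/(proj2 (@E_lt n _ _ Aq Ap Bq Bp)).
  exact/(proj2 (@E_lt n _ _ Ar Aq Br Bq)).
move=> [p [q [r [H1 H2 H3 H4 H5]]]]; apply: H; exists p, q, r.
have [Ap Bp] := UX_bnd (ltn_trans H1 (ltn_trans H2 H3)) Hb.
have [Aq Bq] := UX_bnd (ltn_trans H2 H3) Hb.
have [Ar Br] := UX_bnd H3 Hb.
move: H4 H5; rewrite !nth_mkseq; try lia.
move=> H4 H5; split => //; split.
  exact/(proj1 (@E_lt n _ _ Aq Ap Bq Bp)).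
exact/(proj1 (@E_lt n _ _ Ar Aq Br Bq)).
Qed.

Lemma th_abs n u v : (0 < u <= 2 * n)%N -> (0 < v <= 2 * n)%N ->
  absz (th n u) = absz (th n v) -> u = v \/ (u + v = (2 * n).+1)%N.
Proof. move=> H1 H2; rewrite /th; case: ifP => H3; case: ifP => H4; lia. Qed.

Lemma dir_rev n w : (1 <= n)%N -> signed_perm n w ->
  (forall tau, tau \in six_patterns -> avoids_signed w tau) ->
  exists pi, SC321 n pi /\ Theta n pi = w.
Proof.
move=> hn Hsp Hav.
have Hsz : size w = n by have := perm_size Hsp; rewrite size_map size_iota.
have Hb : forall i, (i < n)%N -> nth 0%R w i <> 0%R /\ (absz (nth 0%R w i) <= n)%N.
  move=> i Hi; have : absz (nth 0%R w i) \in iota 1 n.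
    by rewrite -(perm_mem Hsp); apply: map_f; apply: mem_nth; rewrite Hsz.
  rewrite mem_iota => H; split; lia.
have Hu : uniq (map absz w) by rewrite (perm_uniq Hsp) iota_uniq.
have Hd : forall i j, (i < n)%N -> (j < n)%N -> i <> j ->
    nth 0%R w i <> nth 0%R w j /\ nth 0%R w i <> (- nth 0%R w j)%R.
  move=> i j Hi Hj Hij.
  have H : nth 0%N (map absz w) i != nth 0%N (map absz w) j.
    by rewrite nth_uniq ?size_map ?Hsz //; apply/eqP.
  rewrite !(nth_map 0%R) ?Hsz // in H; split; lia.
have Hpiw : forall p, (p < 2 * n)%N -> nth 0%N (piw n w) p = E n (UX n (nth 0%R w) p).
  by move=> p Hp; rewrite nth_mkseq.
exists (piw n w); split; [split|].
- rewrite /is_perm_word.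
  have Hup : uniq (piw n w).
    apply/(uniqP 0%N) => p q; rewrite !inE size_mkseq => Hp Hq; rewrite !Hpiw // => HE.
    have [Ap Bp] := UX_bnd Hp Hb; have [Aq Bq] := UX_bnd Hq Hb.
    have HU : UX n (nth 0%R w) p = UX n (nth 0%R w) q.
      case: (ltrgtP (UX n (nth 0%R w) p) (UX n (nth 0%R w) q)) => // H.
        by have := proj2 (E_lt Ap Aq Bp Bq) H; lia.
      by have := proj2 (E_lt Aq Ap Bq Bp) H; lia.
    case: (UX_dec (nth 0%R w) Hp) => [[a [Ha Ea Va]]|[a [Ha Ea Va]]];
    case: (UX_dec (nth 0%R w) Hq) => [[b [Hb' Eb Vb]]|[b [Hb' Eb Vb]]];
    rewrite Va Vb in HU; subst p q;
    (have [Eab|/eqP Hab] := eqVneq a b; [ subst b; have := Hb a Ha; lia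
                                       | have := Hd a b Ha Hb' Hab; lia]).
  have Hsub : {subset piw n w <= iota 1 (2 * n)}.
    move=> v /(nthP 0%N) [p Hp <-]; rewrite size_mkseq in Hp.
    rewrite Hpiw // mem_iota; have [A B] := UX_bnd Hp Hb; have := E_bnd A B; lia.
  have Hle : (size (iota 1 (2 * n)) <= size (piw n w))%N by rewrite size_mkseq size_iota.
  have [_ Heq] := uniq_min_size Hup Hsub Hle.
  exact: uniq_perm Hup (iota_uniq _ _) Heq.
- move=> i; rewrite size_mkseq => Hi; rewrite !Hpiw; try lia.
  case: (UX_dec (nth 0%R w) Hi) => [[a [Ha Ea Va]]|[a [Ha Ea Va]]]; rewrite Va; subst i.
    have -> : (2 * n - 1 - (n.-1 - a) = n + a)%N by lia.
    rewrite UX_hi; have [A B] := Hb a Ha; exact: E_neg.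
  have -> : (2 * n - 1 - (n + a) = n.-1 - a)%N by lia.
  rewrite UX_lo // addnC; have [A B] := Hb a Ha; exact: E_neg.
- rewrite /piw; apply/mk_321 => // H.
  have HP := U321_Pat (fun i Hi => (Hb i Hi).1) Hd H.
  have : Pat w by rewrite /Pat Hsz.
  move/(six_Pat (w := w)) => [].
    by move=> i; rewrite Hsz => Hi; have [A _] := Hb i Hi; lia.
  by move=> tau [Ht Hc]; exact: (Hav tau Ht Hc).
- rewrite Theta_th; apply: (eq_from_nth (x0 := 0%R)).
    by rewrite size_map size_drop size_mkseq Hsz; lia.
  move=> i; rewrite size_map size_drop size_mkseq => Hi.
  rewrite (nth_map 0%N) ?size_drop ?size_mkseq; last lia.
  rewrite nth_drop Hpiw; last lia.
  rewrite UX_hi; have [A B] := Hb i ltac:(lia); exact: E_theta.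
Qed.

Lemma dir_fwd n w pi : (1 <= n)%N -> SC321 n pi -> Theta n pi = w ->
  signed_perm n w /\ (forall tau, tau \in six_patterns -> avoids_signed w tau).
Proof.
move=> hn [Hperm Hcen H321] Ht.
have Hspi : size pi = (2 * n)%N by rewrite (perm_size Hperm) size_iota.
have Hval : forall p, (p < 2 * n)%N -> (0 < nth 0%N pi p <= 2 * n)%N.
  move=> p Hp; have : nth 0%N pi p \in iota 1 (2 * n).
    by rewrite -(perm_mem Hperm) mem_nth // Hspi.
  rewrite mem_iota; lia.
have Hupi : uniq pi by rewrite (perm_uniq Hperm) iota_uniq.
have Hinj : forall p q, (p < 2 * n)%N -> (q < 2 * n)%N -> nth 0%N pi p = nth 0%N pi q -> p = q.
  move=> p q Hp Hq E1; apply/eqP; rewrite -(nth_uniq 0%N _ _ Hupi) ?Hspi //; exact/eqP.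
have Hsz : size w = n by rewrite -Ht Theta_th size_map size_drop Hspi; lia.
have Hx : forall i, (i < n)%N -> nth 0%R w i = th n (nth 0%N pi (n + i)).
  move=> i Hi; rewrite -Ht Theta_th (nth_map 0%N) ?size_drop ?Hspi; last lia.
  by rewrite nth_drop.
have Hc : forall p, (p < 2 * n)%N -> (nth 0%N pi p + nth 0%N pi (2 * n - 1 - p) = (2 * n).+1)%N.
  by move=> p Hp; have := Hcen p; rewrite Hspi; apply.
have Hb : forall i, (i < n)%N -> nth 0%R w i <> 0%R /\ (absz (nth 0%R w i) <= n)%N.
  move=> i Hi; rewrite Hx //; have /andP [V1 V2] := Hval (n + i) ltac:(lia).
  have [A B] := th_bnd V1 V2.
  split => //; lia.
have Heq : pi = piw n w.
  apply: (eq_from_nth (x0 := 0%N)); first by rewrite size_mkseq Hspi.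
  move=> p; rewrite Hspi => Hp; rewrite nth_mkseq //.
  case: (UX_dec (nth 0%R w) Hp) => [[a [Ha -> ->]]|[a [Ha -> ->]]].
    have H1 := Hc (n + a) ltac:(lia).
    rewrite (_ : (2 * n - 1 - (n + a) = n.-1 - a)%N) in H1; last lia.
    rewrite Hx //.
    have /andP [V1 V2] := Hval (n + a) ltac:(lia).
    have [A B] := th_bnd V1 V2.
    have := @E_neg n _ A ltac:(lia); rewrite theta_E; lia.
  by rewrite Hx // theta_E.
split.
- rewrite /signed_perm.
  have Hu : uniq (map absz w).
    apply/(uniqP 0%N) => i j; rewrite !inE size_map Hsz => Hi Hj.
    rewrite !(nth_map 0%R) ?Hsz // !Hx // => Habs.
    case: (th_abs (Hval (n + i) ltac:(lia)) (Hval (n + j) ltac:(lia)) Habs) => H.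
      by have := Hinj (n + i) (n + j) ltac:(lia) ltac:(lia) H; lia.
    have H2 := Hc (n + j) ltac:(lia).
    have E2 : nth 0%N pi (n + i) = nth 0%N pi (2 * n - 1 - (n + j)) by lia.
    have := Hinj (n + i) (2 * n - 1 - (n + j)) ltac:(lia) ltac:(lia) E2; lia.
  have Hsub : {subset map absz w <= iota 1 n}.
    move=> v /mapP [y Hy ->]; have [i Hi <-] := nthP 0%R Hy.
    rewrite Hsz in Hi; rewrite mem_iota; have [A B] := Hb i Hi.
    by move: A B; move: (nth _ _ i) => z A B; lia.
  have Hle : (size (iota 1 n) <= size (map absz w))%N by rewrite size_map size_iota Hsz.
  have [_ Heqi] := uniq_min_size Hu Hsub Hle.
  exact: uniq_perm Hu (iota_uniq _ _) Heqi.
- move=> tau Htau Hcont.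
  have HP : Pat w.
    apply/(six_Pat (w := w)); last by exists tau.
    by move=> i; rewrite Hsz => Hi; have [A _] := Hb i Hi; lia.
  have H := Pat_321 HP; rewrite Hsz in H.
  move: H321; rewrite Heq /piw; move/(mk_321 Hb); apply; exact: H.
Qed.

Theorem mainTheorem11 (n : nat) (hn : 1 <= n) (w : seq int) :
  (exists pi : seq nat, SC321 n pi /\ Theta n pi = w) <->
  (signed_perm n w /\ forall tau, tau \in six_patterns -> avoids_signed w tau).
Proof.
split.
  by move=> [pi [H1 H2]]; exact: dir_fwd hn H1 H2.
by move=> [H1 H2]; exact: dir_rev hn H1 H2.
Qed.
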